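(* Consider an instance with $n$ agents, $m$ indivisible items and binary additive valuations, and fix a stable allocation $\chi$ with profile $(h_1,\dots,h_n)$ (notation as in the context). Define $p_d,q_d,r_d,s_d$ as follows, for integers $d\ge0$: $p_d=\{i: h_i=d \text{ and } \chi \text{ admits a transfer } i\to j \text{ for some } j \text{ with } h_j=d-1\}$, $q_d=\{i: h_i=d \text{ and } \chi \text{ admits a transfer } k\to i \text{ for some } k \text{ with } h_k=d+1\}$, $r_d=\{i:h_i=d,\ i\notin p_d\cup q_d\}$, $s_d=p_d\cup q_{d-1}$ (with $q_{-1}=\emptyset$). Then $\mathsf{layer}_d=r_d$ and $\mathsf{layer}^-_d=s_d$ for every $d$.
   Context: Agents $[n]$, items $[m]$. Each agent $i$ has a set $L_i\subseteq[m]$ of liked items and valuation $v_i(S)=|S\cap L_i|$. An allocation $\chi=(\chi_1,\dots,\chi_n)$ is a tuple of pairwise disjoint subsets of $[m]$; it is clean if $\chi_i\subseteq L_i$ for all $i$, and max-USW if it maximizes $\sum_i v_i(\chi_i)$. Throughout, ''allocation'' means a clean max-USW allocation. Profile: $(h_1,\dots,h_n)$, $h_i=|\chi_i|$. Given $\chi$, form a directed graph on $[n]$ with an arc $(i,i')$, $i\ne i'$, whenever some $o\in\chi_i$ has $o\in L_{i'}$; $\chi$ admits a transfer $u\to v$ if there is a simple directed path from $u$ to $v$ with at least one arc. A transfer is narrowing if $h_u\ge h_v+2$; $\chi$ is stable if it admits no narrowing transfer. For an integer $d\ge0$, $\mathsf{layer}_d$ is the set of agents $i$ with $|\chi'_i|=d$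 for every stable allocation $\chi'$; for an integer $d\ge1$, $\mathsf{layer}^-_d$ is the set of agents $i$ such that $\{|\chi'_i|:\chi' \text{ stable}\}=\{d-1,d\}$. *)

(* Defs.v *)
From mathcomp Require Import all_boot.
Set Implicit Arguments. Unset Strict Implicit. Unset Printing Implicit Defensive.

Section Fair.
Variables (n m : nat) (L : 'I_n -> {set 'I_m}).

Definition alloc := {ffun 'I_n -> {set 'I_m}}.

Definition is_alloc (c : alloc) : Prop :=
  forall i j : 'I_n, i != j -> [disjoint c i & c j].

Definition clean (c : alloc) : Prop := forall i, c i \subset L i.

(* utilitarian social welfare: v_i(S) = |S \cap L_i| *)
Definition usw (c : alloc) : nat := \sum_(i < n) #|c i :&: L i|.

Definition max_usw (c : alloc) : Prop :=
  is_alloc c /\ forall c' : alloc, is_alloc c' -> usw c' <= usw c.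

(* "allocation" = clean max-USW allocation *)
Definition good (c : alloc) : Prop := clean c /\ max_usw c.

Definition arc (c : alloc) : rel 'I_n :=
  fun i i' => (i != i') && [exists o, (o \in c i) && (o \in L i')].

Definition transfer (c : alloc) (u v : 'I_n) : Prop :=
  exists p : seq 'I_n,
    [/\ p != [::], path (arc c) u p, last u p = v & uniq (u :: p)].

Definition stable (c : alloc) : Prop :=
  good c /\ ~ (exists u v, #|c v| + 2 <= #|c u| /\ transfer c u v).

Definition layer (d : nat) (i : 'I_n) : Prop :=
  forall c, stable c -> #|c i| = d.

(* {|c i| : c stable} = {d-1, d}, for d >= 1 *)
Definition layerm (d : nat) (i : 'I_n) : Prop :=
  forall k, (exists c, stable c /\ #|c i| = k) <-> (k = d.-1 \/ k = d).

Definition pset (c : alloc) (d : nat) (i : 'I_n) : Prop :=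
  #|c i| = d /\ exists j, #|c j| + 1 = d /\ transfer c i j.
Definition qset (c : alloc) (d : nat) (i : 'I_n) : Prop :=
  #|c i| = d /\ exists k, #|c k| = d + 1 /\ transfer c k i.
Definition rset (c : alloc) (d : nat) (i : 'I_n) : Prop :=
  #|c i| = d /\ ~ pset c d i /\ ~ qset c d i.
(* s_d = p_d ∪ q_{d-1}, with q_{-1} = ∅ *)
Definition sset (c : alloc) (d : nat) (i : 'I_n) : Prop :=
  pset c d i \/ (0 < d /\ qset c d.-1 i).

End Fair.

(* Main.v *)
Require Import Defs.
From mathcomp Require Import all_boot zify.
From Stdlib Require Import Classical.
Set Implicit Arguments. Unset Strict Implicit. Unset Printing Implicit Defensive.

Section S.
Variables (n m : nat) (L : 'I_n -> {set 'I_m}).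
Implicit Types (c : alloc n m).

Lemma is_allocP c : is_alloc c <-> (forall o x y, o \in c x -> o \in c y -> x = y).
Proof.
split.
- move=> H o x y hx hy; apply/eqP; apply/negPn/negP => nxy.
  by move/disjointFr: (H _ _ nxy) => /(_ o hx); rewrite hy.
- move=> H x y nxy; apply/pred0P => o /=; apply/negbTE/negP => /andP[hx hy].
  by move: nxy; rewrite (H _ _ _ hx hy) eqxx.
Qed.

Lemma good_usw c : clean L c -> usw L c = \sum_(i < n) #|c i|.
Proof. by move=> hc; apply: eq_bigr => i _; rewrite (setIidPl (hc i)). Qed.

Lemma good_of c c' : good L c -> is_alloc c' -> clean L c' ->
  \sum_(i < n) #|c' i| = \sum_(i < n) #|c i| -> good L c'.
Proof.
move=> [hc [ha hm]] ha' hc' hs; split=> //; split=> // c'' h''.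
by rewrite (good_usw hc') hs -(good_usw hc); apply: hm.
Qed.

Lemma sum_shift (f g : 'I_n -> nat) u v :
  (forall x, f x + (x == u) = g x + (x == v)) ->
  \sum_(i < n) f i = \sum_(i < n) g i.
Proof.
move=> H.
have : \sum_(i < n) (f i + (i == u)) = \sum_(i < n) (g i + (i == v)).
  by apply: eq_bigr => i _; apply: H.
have e1 : forall w : 'I_n, \sum_(i < n) (i == w : nat) = 1.
  move=> w; rewrite (bigD1 w) //= eqxx big1 // => i /negbTE -> //.
rewrite !big_split /= !e1; lia.
Qed.

Lemma move1 c u b o : good L c -> o \in c u -> o \in L b -> u != b ->
  exists c1, [/\ good L c1, (forall x, x != u -> c x \subset c1 x) &
     forall x, #|c1 x| + (x == u) = #|c x| + (x == b)].
Proof.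
move=> hg hou hob nub; have [hc [ha _]] := hg.
move/is_allocP: (ha) => hA.
pose c1 : alloc n m := [ffun x => if x == u then c u :\ o else if x == b then o |: c b else c x].
have mem1 : forall o' x, (o' \in c1 x) = (if o' == o then x == b else o' \in c x).
  move=> o' x; rewrite ffunE.
  case: (eqVneq x u) => [->|nxu].
    rewrite (negbTE nub) !inE; case: (eqVneq o' o) => //= ->; by rewrite eqxx.
  case: (eqVneq x b) => [->|nxb]; rewrite ?inE.
    by case: (eqVneq o' o).
  case: (eqVneq o' o) => // ->; apply/negbTE/negP => hox.
  by move: nxu; rewrite (hA _ _ _ hox hou) eqxx.
have hnb : o \notin c b.
  by apply/negP => hb; move: nub; rewrite (hA _ _ _ hou hb) eqxx.
have sz : forall x, #|c1 x| + (x == u) = #|c x| + (x == b).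
  move=> x; rewrite ffunE.
  case: (eqVneq x u) => [->|nxu].
    by rewrite (negbTE nub) (cardsD1 o (c u)) hou; lia.
  case: (eqVneq x b) => [->|nxb]; last by [].
  by rewrite cardsU1 hnb; lia.
have ha1 : is_alloc c1.
  apply/is_allocP => o' x y; rewrite !mem1.
  case: (eqVneq o' o) => [_ /eqP -> /eqP -> //|_]; exact: hA.
have hc1 : clean L c1.
  move=> x; apply/subsetP => o'; rewrite mem1.
  case: (eqVneq o' o) => [-> /eqP -> //|_ h]; exact: (subsetP (hc x)).
exists c1; split=> //.
- apply: good_of hg ha1 hc1 _; exact: sum_shift sz.
- move=> x nxu; apply/subsetP => o'; rewrite mem1.
  case: (eqVneq o' o) => [-> h|//]; by move: nxu; rewrite (hA _ _ _ h hou) eqxx.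
Qed.

Lemma exec_path (p : seq 'I_n) : forall c (u : 'I_n), good L c -> path (Defs.arc L c) u p -> uniq (u :: p) ->
  exists c', good L c' /\ forall x, #|c' x| + (x == u) = #|c x| + (x == last u p).
Proof.
elim: p => [|b p IH] c u hg.
  by move=> _ _; exists c; split=> // x; rewrite /=.
rewrite /= => /andP[hub hp] /andP[hu hun].
move: hub => /andP[nub /existsP[o /andP[hou hob]]].
have [c1 [hg1 hsub hsz]] := move1 hg hou hob nub.
have hp1 : path (Defs.arc L c1) b p.
  apply: (sub_in_path (P := predC1 u)) hp.
  - move=> x y hx _ /andP[nxy /existsP[o' /andP[h1 h2]]].
    apply/andP; split=> //; apply/existsP; exists o'.
    by rewrite (subsetP (hsub x hx)) //.
  - by apply/allP => x hx /=; apply/negP => /eqP hxu; move: hu; rewrite -hxu hx.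
have [c2 [hg2 hsz2]] := IH c1 b hg1 hp1 hun.
exists c2; split=> // x.
have := hsz2 x; have := hsz x; rewrite /=; case: (x == b); case: (x == u); case: (x == last b p); simpl; lia.
Qed.

Lemma exec c u v : good L c -> transfer L c u v ->
  exists c', good L c' /\ forall x, #|c' x| + (x == u) = #|c x| + (x == v).
Proof.
move=> hg [p [_ hp <- hu]]; exact: exec_path.
Qed.


Lemma rev_simple (e e' : rel 'I_n) (a : 'I_n) (p : seq 'I_n) :
  path e a p -> uniq (a :: p) -> a != last a p ->
  (forall x y, e x y -> e' y x) ->
  exists p'', [/\ p'' != [::], path e' (last a p) p'', last (last a p) p'' = a
               & uniq (last a p :: p'')].
Proof.
move=> hp hu nab hee.
have hr : rev (a :: p) = last a p :: rev (belast a p) by rewrite lastI rev_rcons.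
exists (rev (belast a p)); split.
- rewrite -size_eq0 size_rev size_belast size_eq0; apply/negP => /eqP ep; move: nab; by rewrite ep eqxx.
- rewrite rev_path; apply: sub_path hp => x y; exact: hee.
- have := congr1 (last a) hr; rewrite /= rev_cons last_rcons => <-.
  by case: (rev (belast a p)).
- by rewrite -hr rev_uniq.
Qed.

Lemma card_sum (A : {set 'I_m}) : #|A| = \sum_(o < m) (o \in A : nat).
Proof.
by rewrite -sum1_card big_mkcond /=; apply: eq_bigr => o _; case: (o \in A).
Qed.

Lemma all_items c c' o x : good L c -> good L c' -> o \in c x -> exists y, o \in c' y.
Proof.
move=> [hc _] [hc' [ha' hm']] hox.
case: (boolP [exists y, o \in c' y]) => [/existsP//|/existsPn hn].
exfalso.
have hoL : o \in L x by apply: (subsetP (hc x)).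
pose c'' : alloc n m := [ffun y => if y == x then o |: c' x else c' y].
have ha'' : is_alloc c''.
  apply/is_allocP => o' y z; rewrite !ffunE.
  have hA := (proj1 (is_allocP c') ha').
  case: (eqVneq y x) => [->|nyx]; case: (eqVneq z x) => [->|nzx] //; rewrite ?inE.
  - case/orP => [/eqP ->|h1] h2; first by move: (hn z); rewrite h2.
    exact: (hA o' x z h1 h2).
  - move=> h1; case/orP => [/eqP eo|h2]; first by move: (hn y); rewrite -eo h1.
    exact: (hA o' y x h1 h2).
  - move=> h1 h2; exact: (hA o' y z h1 h2).
have := hm' c'' ha''; rewrite /usw (bigD1 x) //= [X in _ <= X](bigD1 x) //=.
rewrite ffunE eqxx.
have -> : \sum_(i < n | i != x) #|c'' i :&: L i| = \sum_(i < n | i != x) #|c' i :&: L i|.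
  by apply: eq_bigr => i /negbTE h; rewrite ffunE h.
have -> : (o |: c' x) :&: L x = o |: (c' x :&: L x).
  by apply/setP => z; rewrite !inE; case: (eqVneq z o) => [->|] //=; rewrite hoL.
by rewrite cardsU1 inE (negbTE (hn x)) /= -addnA add1n ltnn.
Qed.

Lemma flow c c' a : good L c -> good L c' -> #|c' a| < #|c a| ->
  exists b, [/\ #|c b| < #|c' b|, transfer L c a b & transfer L c' b a].
Proof.
move=> hg hg' hlt.
have [hc [ha _]] := hg; have [hc' [ha' _]] := hg'.
have hA := proj1 (is_allocP c) ha; have hA' := proj1 (is_allocP c') ha'.
pose E : rel 'I_n := fun x y => (x != y) && [exists o, (o \in c x) && (o \in c' y)].
pose R := [set y | connect E a y].
have hR : exists2 b, b \in R & #|c b| < #|c' b|.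
  case: (boolP [exists b in R, #|c b| < #|c' b|]) => [/exists_inP //| /exists_inPn hn]; exfalso.
  have h1 : \sum_(y in R) #|c' y| < \sum_(y in R) #|c y|.
    rewrite (bigD1 a) ?inE ?connect0 //= [X in _ < X](bigD1 a) ?inE ?connect0 //=.
    apply: leq_trans (_ : #|c' a|.+1 + \sum_(i in R | i != a) #|c i| <= _).
      rewrite addSn ltnS leq_add2l; apply: leq_sum => i /andP[hi _].
      by have := hn i hi; rewrite -leqNgt.
    by rewrite leq_add2r.
  have h2 : \sum_(y in R) #|c y| <= \sum_(y in R) #|c' y|.
    under eq_bigr do rewrite card_sum.
    under [X in _ <= X]eq_bigr do rewrite card_sum.
    rewrite exchange_big [X in _ <= X]exchange_big /=.
    apply: leq_sum => o _.
    case: (boolP [exists y in R, o \in c y]) => [/exists_inP[y hy hoy]|/exists_inPn hn2].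
    + rewrite (bigD1 y) //= hoy big1 /=; last first.
        move=> i /andP[_ niy]; case: (boolP (o \in c i)) => // hoi; by move: niy; rewrite (hA o i y hoi hoy) eqxx.
      have [z hz] := all_items hg hg' hoy.
      have zR : z \in R.
        move: hy; rewrite !inE => hy; apply: connect_trans hy _.
        case: (eqVneq y z) => [->|nyz]; first exact: connect0.
        apply: connect1; rewrite /E nyz /=; apply/existsP; exists o; by rewrite hoy.
      by rewrite (bigD1 z) //= hz.
    + by rewrite big1 // => i hi; rewrite (negbTE (hn2 i hi)).
  by move: (leq_trans h1 h2); rewrite ltnn.
have [b hb hltb] := hR.
move: hb; rewrite inE => /connectP[p hp hlast].
have nab : a != b by apply/negP => /eqP eab; move: hltb; rewrite -eab ltnNge ltnW.
case: (shortenP hp) hlast => p' hp' hu _ hlast.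
have hEc : forall x y, E x y -> Defs.arc L c x y.
  move=> x y /andP[nxy /existsP[o /andP[h1 h2]]]; rewrite /Defs.arc nxy /=.
  apply/existsP; exists o; by rewrite h1 (subsetP (hc' y)).
have hEc' : forall x y, E x y -> Defs.arc L c' y x.
  move=> x y /andP[nxy /existsP[o /andP[h1 h2]]]; rewrite /Defs.arc eq_sym nxy /=.
  apply/existsP; exists o; by rewrite h2 (subsetP (hc x)).
exists b; split=> //.
- exists p'; split.
  + by apply/negP => /eqP ep; move: hlast nab; rewrite ep /= => ->; rewrite eqxx.
  + exact: sub_path hp'.
  + by rewrite hlast.
  + exact: hu.
- have nal : a != last a p' by rewrite -hlast.
  have [p'' [h1 h2 h3 h4]] := rev_simple hp' hu nal hEc'.
  by exists p''; rewrite hlast; split.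
Qed.


Definition Phi c := \sum_(i < n) #|c i| * #|c i|.

Lemma sum_ind1 (u : 'I_n) : \sum_(i < n) (i == u : nat) = 1.
Proof. rewrite (bigD1 u) //= eqxx big1 // => i /negbTE -> //. Qed.

Lemma sum_ind (f : 'I_n -> nat) u : \sum_(i < n) f i * (i == u) = f u.
Proof. rewrite (bigD1 u) //= eqxx big1 ?muln1 ?addn0 // => i /negbTE ->; by rewrite muln0. Qed.

Lemma phi_shift c c' u v : u != v ->
  (forall x, #|c' x| + (x == u) = #|c x| + (x == v)) ->
  Phi c' + 2 * #|c u| = Phi c + 2 * #|c v| + 2.
Proof.
move=> nuv H.
have : \sum_(i < n) (#|c' i| * #|c' i| + (2 * #|c i|) * (i == u)) =
       \sum_(i < n) (#|c i| * #|c i| + (i == u) + (2 * #|c i| + 1) * (i == v)).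
  apply: eq_bigr => x _; have := H x.
  have [exu|nxu] := eqVneq x u; have [exv|nxv] := eqVneq x v.
  - by move: nuv; rewrite -exu -exv eqxx.
  - by rewrite exu /= ?muln1 ?muln0 ?addn0 ?addn1 => h; nia.
  - by rewrite exv /= ?muln1 ?muln0 ?addn0 ?addn1 => h; nia.
  - by rewrite /= !muln0 !addn0 => ->.
rewrite !big_split /= sum_ind sum_ind sum_ind1 /Phi; move=> ->; rewrite -!addnA; congr (_ + _); lia.
Qed.

Lemma phi_min_exists c : good L c ->
  exists c0, good L c0 /\ forall c', good L c' -> Phi c0 <= Phi c'.
Proof.
suff : forall k c, good L c -> Phi c = k ->
  exists c0, good L c0 /\ forall c', good L c' -> Phi c0 <= Phi c'.
  by move=> H hg; exact: H _ _ hg erefl.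
elim/ltn_ind => k IH c1 hg hk.
case: (classic (forall c', good L c' -> Phi c1 <= Phi c')) => [h|h].
  by exists c1.
have [c2 h2] := not_all_ex_not _ _ h.
have [hg2 hlt] := imply_to_and _ _ h2.
apply: (IH (Phi c2)) hg2 erefl; rewrite -hk ltnNge; exact/negP.
Qed.

Lemma transfer_good c u v : good L c -> transfer L c u v -> #|c v| < #|c u| ->
  exists c', good L c' /\ Phi c' + 2 * #|c u| = Phi c + 2 * #|c v| + 2 /\
     forall x, #|c' x| + (x == u) = #|c x| + (x == v).
Proof.
move=> hg ht hlt; have [c' [hg' hs]] := exec hg ht.
have nuv : u != v by apply/negP => /eqP e; move: hlt; rewrite e ltnn.
exists c'; split=> //; split=> //; exact: phi_shift.
Qed.

Lemma stable_narrow c : good L c -> (forall c', good L c' -> Phi c <= Phi c') -> stable L c.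
Proof.
move=> hg hmin; split=> // [[u [v [hle ht]]]].
have hlt : #|c v| < #|c u| by lia.
have [c' [hg' [hp _]]] := transfer_good hg ht hlt.
have := hmin c' hg'; lia.
Qed.

Lemma sum_exists_lt (f g : 'I_n -> nat) x : \sum_(i < n) f i = \sum_(i < n) g i ->
  f x != g x -> exists a, g a < f a.
Proof.
move=> hs hne.
case: (boolP [exists a, g a < f a]) => [/existsP //|/existsPn hn]; exfalso.
have hle : forall a, f a <= g a by move=> a; have := hn a; rewrite -leqNgt.
have hx : f x < g x by rewrite ltn_neqAle hne hle.
have : \sum_(i < n) (f i + (i == x)) <= \sum_(i < n) g i.
  apply: leq_sum => i _; case: (eqVneq i x) => [->|_]; rewrite ?addn1 ?addn0 //; exact: hle.
by rewrite big_split /= sum_ind1 hs addn1 ltnn.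
Qed.

Lemma good_sum_eq c c' : good L c -> good L c' ->
  \sum_(i < n) #|c i| = \sum_(i < n) #|c' i|.
Proof.
move=> [hc [ha hm]] [hc' [ha' hm']].
rewrite -(good_usw hc) -(good_usw hc'); apply/eqP; rewrite eqn_leq.
by rewrite hm // hm'.
Qed.

Definition D c c' := \sum_(i < n) ((#|c i| - #|c' i|) + (#|c' i| - #|c i|)).

Lemma stable_min c : stable L c -> forall c', good L c' -> Phi c <= Phi c'.
Proof.
move=> hst; have [hg hnn] := hst.
have [c0 [hg0 hmin0]] := phi_min_exists hg.
suff H : forall k cs, good L cs -> Phi cs = Phi c0 -> D c cs = k -> Phi c = Phi cs.
  move=> c' hg'; rewrite (H _ c0 hg0 erefl erefl); exact: hmin0.
elim/ltn_ind => k IH cs hgs hps hD.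
case: (boolP [exists x, #|c x| != #|cs x|]) => [/existsP[x hx]|/existsPn hall]; last first.
  by apply: eq_bigr => i _; have := hall i; rewrite negbK => /eqP ->.
have [a ha] := sum_exists_lt (good_sum_eq hg hgs) hx.
have [b [hltb htc htcs]] := flow hg hgs ha.
have hstcs : stable L cs.
  by apply: stable_narrow hgs _ => c' hg'; rewrite hps; exact: hmin0.
have h1 : #|c a| <= #|c b| + 1.
  by rewrite leqNgt; apply/negP => h; apply: hnn; exists a, b; split=> //; lia.
have h2 : #|cs b| <= #|cs a| + 1.
  by rewrite leqNgt; apply/negP => h; apply: hstcs.2; exists b, a; split=> //; lia.
have hlt2 : #|cs a| < #|cs b| by lia.
have [css [hgss [hpss hsz]]] := transfer_good hgs htcs hlt2.
have hpe : Phi css = Phi cs by lia.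
have nab : b != a by apply/negP => /eqP e; move: hlt2; rewrite e ltnn.
have eb : #|cs b| = #|c b| + 1 by lia.
have ea : #|c a| = #|cs a| + 1 by lia.
have hDs : D c css + 2 = D c cs.
  have : \sum_(i < n) (((#|c i| - #|css i|) + (#|css i| - #|c i|)) + (i == a) + (i == b))
         = D c cs.
    apply: eq_bigr => y _; have := hsz y.
    have [eyb|nyb] := eqVneq y b; have [eya|nya] := eqVneq y a.
    - by move: nab; rewrite -eyb -eya eqxx.
    - rewrite eyb eb /= => h; lia.
    - rewrite eya ea /= => h; lia.
    - by rewrite /= !addn0 => ->.
  by rewrite big_split big_split /= !sum_ind1 /D -addnA => <-.
rewrite (IH (D c css) _ css hgss _ erefl); first by [].
- by rewrite -hD -hDs addn2.
- by rewrite hpe.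
Qed.


Lemma key c c' a : stable L c -> stable L c' -> #|c' a| < #|c a| ->
  #|c' a| + 1 = #|c a| /\
  exists b, [/\ #|c b| + 1 = #|c a|, #|c' b| = #|c a|, transfer L c a b & transfer L c' b a].
Proof.
move=> [hg hn] [hg' hn'] hlt.
have [b [hltb htc htc']] := flow hg hg' hlt.
have h1 : #|c a| <= #|c b| + 1.
  by rewrite leqNgt; apply/negP => h; apply: hn; exists a, b; split=> //; lia.
have h2 : #|c' b| <= #|c' a| + 1.
  by rewrite leqNgt; apply/negP => h; apply: hn'; exists b, a; split=> //; lia.
split; first lia.
exists b; split=> //; lia.
Qed.

Lemma exec_stable c u v : stable L c -> transfer L c u v -> #|c v| + 1 = #|c u| ->
  exists c', [/\ stable L c', #|c' u| + 1 = #|c u| & #|c' v| = #|c v| + 1].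
Proof.
move=> hst ht he; have [hg _] := hst.
have hlt : #|c v| < #|c u| by lia.
have [c' [hg' [hp hsz]]] := transfer_good hg ht hlt.
have nuv : u != v by apply/negP => /eqP e; move: hlt; rewrite e ltnn.
exists c'; split.
- apply: stable_narrow hg' _ => c'' hg''.
  have := stable_min hst hg''; lia.
- by have := hsz u; rewrite eqxx (negbTE nuv) /=; lia.
- by have := hsz v; rewrite eqxx eq_sym (negbTE nuv) /=; lia.
Qed.

End S.

Theorem lemma3 (n m : nat) (L : 'I_n -> {set 'I_m}) (c : alloc n m) :
  stable L c ->
  (forall (d : nat) (i : 'I_n), layer L d i <-> rset L c d i) /\
  (forall (d : nat) (i : 'I_n), 0 < d -> (layerm L d i <-> sset L c d i)).
Proof.
move=> hst.
have Pex : forall d i, pset L c d i -> exists c', stable L c' /\ #|c' i| + 1 = d.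
  move=> d i [hi [j [hj ht]]].
  have [c' [h1 h2 _]] := exec_stable hst ht (etrans hj (esym hi)).
  by exists c'; rewrite h2 hi.
have Qex : forall d i, qset L c d i -> exists c', stable L c' /\ #|c' i| = d + 1.
  move=> d i [hi [k [hk ht]]].
  have [c' [h1 _ h3]] := exec_stable hst ht (etrans (congr1 (addn^~ 1) hi) (esym hk)).
  by exists c'; rewrite h3 hi.
have Plt : forall c' i, stable L c' -> #|c' i| < #|c i| ->
    #|c' i| + 1 = #|c i| /\ pset L c #|c i| i.
  move=> c' i hs' hlt; have [e [b [hb _ ht _]]] := key hst hs' hlt.
  by split=> //; split=> //; exists b.
have Qgt : forall c' i, stable L c' -> #|c i| < #|c' i| ->
    #|c i| + 1 = #|c' i| /\ qset L c #|c i| i.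
  move=> c' i hs' hlt; have [e [b [hb hb' _ ht]]] := key hs' hst hlt.
  by split=> //; split=> //; exists b; split=> //; rewrite hb' e.
have PQ : forall d i, pset L c d i -> qset L c d i -> False.
  move=> d i hp hq; have [c1 [hs1 e1]] := Pex _ _ hp; have [c2 [hs2 e2]] := Qex _ _ hq.
  have hlt : #|c1 i| < #|c2 i| by lia.
  have [e _] := key hs2 hs1 hlt; lia.
split.
- move=> d i; split.
  + move=> hl; have hi := hl c hst; split=> //; split.
    * by move=> hp; have [c1 [hs1 e1]] := Pex _ _ hp; have := hl c1 hs1; lia.
    * by move=> hq; have [c1 [hs1 e1]] := Qex _ _ hq; have := hl c1 hs1; lia.
  + move=> [hi [hnp hnq]] c' hs'.
    case: (ltngtP #|c' i| #|c i|) => [hlt|hgt|->//].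
    * by have [_ hp] := Plt _ _ hs' hlt; case: hnp; rewrite -hi.
    * by have [_ hq] := Qgt _ _ hs' hgt; case: hnq; rewrite -hi.
- move=> d i hd; split.
  + move=> hl.
    have hc := (proj1 (hl #|c i|)) (ex_intro _ c (conj hst erefl)).
    case: hc => hci.
    * right; split=> //.
      have [c' [hs' e']] := proj2 (hl d) (or_intror erefl).
      have hgt : #|c i| < #|c' i| by lia.
      have [_ hq] := Qgt _ _ hs' hgt; by rewrite -hci.
    * left.
      have [c' [hs' e']] := proj2 (hl d.-1) (or_introl erefl).
      have hlt : #|c' i| < #|c i| by lia.
      have [_ hp] := Plt _ _ hs' hlt; by rewrite -hci.
  + move=> hss k; split.
    * move=> [c' [hs' <-]].
      case: hss => [hp|[_ hq]].
      - have hi := proj1 hp.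
        case: (ltngtP #|c' i| #|c i|) => [hlt|hgt|e].
        + by left; have [e _] := Plt _ _ hs' hlt; lia.
        + have [_ hq] := Qgt _ _ hs' hgt; rewrite hi in hq; case: (PQ _ _ hp hq).
        + by right; lia.
      - have hi := proj1 hq.
        case: (ltngtP #|c' i| #|c i|) => [hlt|hgt|e].
        + have [_ hp] := Plt _ _ hs' hlt; rewrite hi in hp; case: (PQ _ _ hp hq).
        + by right; have [e _] := Qgt _ _ hs' hgt; lia.
        + by left; lia.
    * case: hss => [hp|[_ hq]]; case=> ->.
      - have [c1 [hs1 e1]] := Pex _ _ hp; exists c1; split=> //; lia.
      - by exists c; split=> //; exact: (proj1 hp).
      - by exists c; split=> //; rewrite (proj1 hq).
      - have [c1 [hs1 e1]] := Qex _ _ hq; exists c1; split=> //; lia.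
Qed.
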